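(* For any set $\Phi\cup\{\psi\}$ of $\mathsf{BSML}$-formulas, if $\Phi\vdash\psi$ in the natural deduction system $\mathcal{S}$ described below, then $\Phi\models\psi$.
   Context: Syntax: $\mathsf{BSML}$-formulas $\phi ::= p \mid \neg\phi \mid (\phi\wedge\phi) \mid (\phi\vee\phi) \mid \Diamond\phi \mid \mathrm{NE}$. Classical formulas ($\alpha,\beta$): the $\mathrm{NE}$-free ones. $\Box\phi:=\neg\Diamond\neg\phi$; $\bot:=p\wedge\neg p$; $\bot\!\!\!\bot:=\bot\wedge\mathrm{NE}$. Semantics on Kripke models $M=(W,R,V)$, states $s\subseteq W$: $s\models p$ iff $s\subseteq V(p)$; $s\dashv p$ iff $s\cap V(p)=\emptyset$; $s\models\mathrm{NE}$ iff $s\ne\emptyset$; $s\dashv\mathrm{NE}$ iff $s=\emptyset$; $s\models\neg\phi$ iff $s\dashv\phi$; $s\dashv\neg\phi$ iff $s\models\phi$; $s\models\phi\wedge\psi$ iff both; $s\dashv\phi\wedge\psi$ iff $s=t\cup u$, $t\dashv\phi$, $u\dashv\psi$; $s\models\phi\vee\psi$ iff $s=t\cup u$, $t\models\phi$, $u\models\psi$; $s\dashv\phi\vee\psi$ iff $s\dashv\phi$ and $s\dashv\psi$; $s\models\Diamond\phi$ iff each $w\in s$ has a nonempty $t\subseteq R[w]$ with $t\models\phi$; $s\dashv\Diamond\phi$ iff $R[w]\dashv\phi$ for all $w\in s$. $\Phi\models\psi$ iff every state supporting all of $\Phi$ supports $\psi$. An occurrence $[\psi]$ of a subformula in $\phi$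 is distributive if it is not within the scope of any $\neg$ or $\Diamond$ in $\phi$ ($\Box=\neg\Diamond\neg$); $\phi[\chi/\psi]$ replaces that occurrence by $\chi$. System $\mathcal{S}$ ($\Phi\vdash\psi$ iff some natural deduction derivation of $\psi$ has all undischarged assumptions in $\Phi$; ''$A\Leftrightarrow B$'' = both one-step rules): (a) $\wedge$I; $\wedge$E. (b) $\neg$I: from a derivation of $\bot$ from $\alpha$ infer $\neg\alpha$ discharging $\alpha$, provided its undischarged assumptions contain no $\mathrm{NE}$; from $\alpha,\neg\alpha$ infer $\beta$; $\neg\neg\phi\Leftrightarrow\phi$; $\neg(\phi\wedge\psi)\Leftrightarrow\neg\phi\vee\neg\psi$; $\neg(\phi\vee\psi)\Leftrightarrow\neg\phi\wedge\neg\psi$; $\neg\mathrm{NE}\Leftrightarrow\bot$. (c) from $\phi$ infer $\phi\vee\psi$ if $\psi$ contains no $\mathrm{NE}$; from $\phi$ infer $\phi\vee\phi$; from $\phi\vee\psi$ infer $\psi\vee\phi$; $\vee$E: from $\phi\vee\psi$ and derivations of $\chi$ from $\phi$ and from $\psi$ infer $\chi$ (discharging), provided undischarged assumptions of the subderivations contain no $\mathrm{NE}$; from $\phi\vee\psi$ and a derivation of $\chi$ from $\psi$ whose undischarged assumptions contain no $\mathrm{NE}$ infer $\phi\vee\chi$. (d) from $\bot\vee\phi$ infer $\phi$; from $\bot\!\!\!\bot\vee\phi$ infer any $\psi$. (e) if $\psi$ derivable from $\phi$ alone, from $\Diamond\phi$ infer $\Diamond\psi$; if $\psi$ derivable from $\phi_1,\dots,\phi_n$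 alone, from $\Box\phi_1,\dots,\Box\phi_n$ infer $\Box\psi$; $\neg\Diamond\phi\Leftrightarrow\Box\neg\phi$. (f) from $\Diamond(\phi\vee(\psi\wedge\mathrm{NE}))$ infer $\Diamond\psi$; from $\Diamond\phi,\Diamond\psi$ infer $\Diamond(\phi\vee\psi)$; from $\Box(\phi\wedge\mathrm{NE})$ infer $\Diamond\phi$; from $\Box\phi,\Diamond\psi$ infer $\Box(\phi\vee\psi)$. (g) for a distributive occurrence $[\psi]$ in $\phi$: from $\phi$, a derivation of $\chi$ from $\phi[\psi\wedge\mathrm{NE}/\psi]$ and a derivation of $\chi$ from $\phi[\psi\wedge\bot/\psi]$, infer $\chi$ (discharging); from $\Diamond\phi$ infer $\Diamond\phi[\psi\wedge\mathrm{NE}/\psi]\vee\Diamond\phi[\psi\wedge\bot/\psi]$; from $\Box\phi$ infer $\Box\phi[\psi\wedge\mathrm{NE}/\psi]\vee\Box\phi[\psi\wedge\bot/\psi]$. *)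

(* Defs.v *)
From Stdlib Require Import List.

Inductive form : Type :=
| Atom : nat -> form
| Neg : form -> form
| And : form -> form -> form
| Or : form -> form -> form
| Dia : form -> form
| NE : form.

Fixpoint classical (f : form) : Prop :=
  match f with
  | Atom _ => True
  | Neg a => classical a
  | And a b => classical a /\ classical b
  | Or a b => classical a /\ classical b
  | Dia a => classical a
  | NE => False
  end.

Definition Box (f : form) : form := Neg (Dia (Neg f)).
Definition Bot : form := And (Atom 0) (Neg (Atom 0)).
Definition BBot : form := And Bot NE.

Record model : Type := Model {
  W : Type;
  R : W -> W -> Prop;
  V : nat -> W -> Prop }.

Definition state (M : model) := W M -> Prop.

Definition is_union {M : model} (s t u : state M) : Prop :=
  forall w, s w <-> (t w \/ u w).

Fixpoint supp (M : model) (s : state M) (f : form) {struct f} : Prop :=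
  match f with
  | Atom n => forall w, s w -> V M n w
  | Neg a => anti M s a
  | And a b => supp M s a /\ supp M s b
  | Or a b => exists t u, is_union s t u /\ supp M t a /\ supp M u b
  | Dia a => forall w, s w ->
      exists t : state M, (exists x, t x) /\ (forall x, t x -> R M w x) /\ supp M t a
  | NE => exists w, s w
  end
with anti (M : model) (s : state M) (f : form) {struct f} : Prop :=
  match f with
  | Atom n => forall w, s w -> ~ V M n w
  | Neg a => supp M s a
  | And a b => exists t u, is_union s t u /\ anti M t a /\ anti M u b
  | Or a b => anti M s a /\ anti M s b
  | Dia a => forall w, s w -> anti M (R M w) a
  | NE => forall w, ~ s w
  end.

Definition fset := form -> Prop.
Definition sing (a : form) : fset := fun x => x = a.
Definition funion (G D : fset) : fset := fun x => G x \/ D x.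
Definition nefree (G : fset) : Prop := forall x, G x -> classical x.

Definition entails (Phi : fset) (psi : form) : Prop :=
  forall (M : model) (s : state M), (forall f, Phi f -> supp M s f) -> supp M s psi.

(* An occurrence not in the scope of any Neg or Dia: a context built from
   And / Or only.  phi = plug C psi, and phi[chi/psi] = plug C chi. *)
Inductive dctx : Type :=
| Hole : dctx
| CAndL : dctx -> form -> dctx
| CAndR : form -> dctx -> dctx
| COrL : dctx -> form -> dctx
| COrR : form -> dctx -> dctx.

Fixpoint plug (C : dctx) (x : form) : form :=
  match C with
  | Hole => x
  | CAndL C' b => And (plug C' x) b
  | CAndR a C' => And a (plug C' x)
  | COrL C' b => Or (plug C' x) b
  | COrR a C' => Or a (plug C' x)
  end.

(* Side conditions "undischarged assumptions contain
   no NE" are imposed on the context of the relevant subderivation (which,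
   thanks to weakening, may be taken to be exactly its set of undischarged
   assumptions). *)
Inductive Der : fset -> form -> Prop :=
| D_ass G f : G f -> Der G f
| D_weak G G' f : Der G f -> (forall x, G x -> G' x) -> Der G' f
| D_andI G a b : Der G a -> Der G b -> Der G (And a b)
| D_andE1 G a b : Der G (And a b) -> Der G a
| D_andE2 G a b : Der G (And a b) -> Der G b
| D_negI G a : classical a -> nefree G ->
    Der (funion G (sing a)) Bot -> Der G (Neg a)
| D_negE G a b : classical a -> classical b ->
    Der G a -> Der G (Neg a) -> Der G b
| D_dneI G a : Der G a -> Der G (Neg (Neg a))
| D_dneE G a : Der G (Neg (Neg a)) -> Der G a
| D_dmAnd1 G a b : Der G (Neg (And a b)) -> Der G (Or (Neg a) (Neg b))
| D_dmAnd2 G a b : Der G (Or (Neg a) (Neg b)) -> Der G (Neg (And a b))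
| D_dmOr1 G a b : Der G (Neg (Or a b)) -> Der G (And (Neg a) (Neg b))
| D_dmOr2 G a b : Der G (And (Neg a) (Neg b)) -> Der G (Neg (Or a b))
| D_negNE1 G : Der G (Neg NE) -> Der G Bot
| D_negNE2 G : Der G Bot -> Der G (Neg NE)
| D_orI G a b : classical b -> Der G a -> Der G (Or a b)
| D_orDup G a : Der G a -> Der G (Or a a)
| D_orComm G a b : Der G (Or a b) -> Der G (Or b a)
| D_orE G0 G1 G2 a b c :
    Der G0 (Or a b) ->
    Der (funion G1 (sing a)) c -> Der (funion G2 (sing b)) c ->
    nefree G1 -> nefree G2 ->
    Der (funion G0 (funion G1 G2)) c
| D_orMon G0 G1 a b c :
    Der G0 (Or a b) -> Der (funion G1 (sing b)) c -> nefree G1 ->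
    Der (funion G0 G1) (Or a c)
| D_botOr G a : Der G (Or Bot a) -> Der G a
| D_bbotOr G a b : Der G (Or BBot a) -> Der G b
| D_diaMon G a b : Der (sing a) b -> Der G (Dia a) -> Der G (Dia b)
| D_boxMon G (l : list form) b :
    Der (fun x => In x l) b ->
    (forall a, In a l -> Der G (Box a)) -> Der G (Box b)
| D_negDia1 G a : Der G (Neg (Dia a)) -> Der G (Box (Neg a))
| D_negDia2 G a : Der G (Box (Neg a)) -> Der G (Neg (Dia a))
| D_diaSep G a b : Der G (Dia (Or a (And b NE))) -> Der G (Dia b)
| D_diaJoin G a b : Der G (Dia a) -> Der G (Dia b) -> Der G (Dia (Or a b))
| D_boxNE G a : Der G (Box (And a NE)) -> Der G (Dia a)
| D_boxDia G a b : Der G (Box a) -> Der G (Dia b) -> Der G (Box (Or a b))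
| D_split G0 G1 G2 (C : dctx) p c :
    Der G0 (plug C p) ->
    Der (funion G1 (sing (plug C (And p NE)))) c ->
    Der (funion G2 (sing (plug C (And p Bot)))) c ->
    Der (funion G0 (funion G1 G2)) c
| D_diaSplit G (C : dctx) p :
    Der G (Dia (plug C p)) ->
    Der G (Or (Dia (plug C (And p NE))) (Dia (plug C (And p Bot))))
| D_boxSplit G (C : dctx) p :
    Der G (Box (plug C p)) ->
    Der G (Or (Box (plug C (And p NE))) (Box (plug C (And p Bot)))).

(* Main.v *)
Require Import Defs.
From Stdlib Require Import List Classical.

Lemma union_closed (f : form) : forall (M : model) (s t u : state M),
  is_union s t u ->
  (supp M t f -> supp M u f -> supp M s f) /\ (anti M t f -> anti M u f -> anti M s f).
Proof.
  induction f as [n|a IH|a IHa b IHb|a IHa b IHb|a IH|]; intros M s t u U; simpl.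
  - split; intros Ht Hu w Hw; destruct (proj1 (U w) Hw); eauto.
  - destruct (IH M s t u U); split; auto.
  - split.
    + intros [H1 H2] [H3 H4]; split; [apply (IHa M s t u U) | apply (IHb M s t u U)]; auto.
    + intros [t1 [t2 [Ut [Ha1 Hb1]]]] [u1 [u2 [Uu [Ha2 Hb2]]]].
      exists (fun w => t1 w \/ u1 w), (fun w => t2 w \/ u2 w). split; [|split].
      * intro w. rewrite (U w), (Ut w), (Uu w). tauto.
      * apply (IHa M _ t1 u1); auto. intro; tauto.
      * apply (IHb M _ t2 u2); auto. intro; tauto.
  - split.
    + intros [t1 [t2 [Ut [Ha1 Hb1]]]] [u1 [u2 [Uu [Ha2 Hb2]]]].
      exists (fun w => t1 w \/ u1 w), (fun w => t2 w \/ u2 w). split; [|split].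
      * intro w. rewrite (U w), (Ut w), (Uu w). tauto.
      * apply (IHa M _ t1 u1); auto. intro; tauto.
      * apply (IHb M _ t2 u2); auto. intro; tauto.
    + intros [H1 H2] [H3 H4]; split; [apply (IHa M s t u U) | apply (IHb M s t u U)]; auto.
  - split; intros Ht Hu w Hw; destruct (proj1 (U w) Hw); eauto.
  - split.
    + intros [w Hw] _. exists w. apply (U w). auto.
    + intros Ht Hu w Hw. destruct (proj1 (U w) Hw); firstorder.
Qed.

Lemma ext_supp M (s u : state M) f : (forall w, s w <-> u w) -> supp M u f -> supp M s f.
Proof.
  intros E H. apply (proj1 (union_closed f M s u u (fun w => ltac:(rewrite (E w); tauto)))); auto.
Qed.

Fixpoint tr (M : model) (w : W M) (f : form) : Prop :=
  match f with
  | Atom n => V M n w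
  | Neg a => ~ tr M w a
  | And a b => tr M w a /\ tr M w b
  | Or a b => tr M w a \/ tr M w b
  | Dia a => exists v, R M w v /\ tr M v a
  | NE => True
  end.

Lemma flat (f : form) : classical f -> forall (M : model) (s : state M),
  (supp M s f <-> forall w, s w -> tr M w f) /\ (anti M s f <-> forall w, s w -> ~ tr M w f).
Proof.
  induction f as [n|a IH|a IHa b IHb|a IHa b IHb|a IH|]; intros Hc M s; simpl in *.
  - split; split; auto.
  - destruct (IH Hc M s) as [H1 H2]. rewrite H1, H2. split; [tauto|].
    split; intros H w Hw; [intro; eauto | apply NNPP; eauto].
  - destruct Hc as [Ca Cb]. split.
    + rewrite (proj1 (IHa Ca M s)), (proj1 (IHb Cb M s)). firstorder.
    + split.
      * intros [t [u [U [Ha Hb]]]] w Hw. pose proof (proj1 (proj2 (IHa Ca M t)) Ha) as Ha'.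
        pose proof (proj1 (proj2 (IHb Cb M u)) Hb) as Hb'. destruct (proj1 (U w) Hw); firstorder.
      * intros H. exists (fun w => s w /\ ~ tr M w a), (fun w => s w /\ ~ tr M w b).
        split; [|split].
        -- intro w. split; [|tauto]. intro Hw. specialize (H w Hw).
           destruct (classic (tr M w a)); tauto.
        -- apply (proj2 (IHa Ca M _)). tauto.
        -- apply (proj2 (IHb Cb M _)). tauto.
  - destruct Hc as [Ca Cb]. split.
    + split.
      * intros [t [u [U [Ha Hb]]]] w Hw. pose proof (proj1 (proj1 (IHa Ca M t)) Ha) as Ha'.
        pose proof (proj1 (proj1 (IHb Cb M u)) Hb) as Hb'. destruct (proj1 (U w) Hw); firstorder.
      * intros H. exists (fun w => s w /\ tr M w a), (fun w => s w /\ tr M w b).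
        split; [|split].
        -- intro w. split; [|tauto]. intro Hw. specialize (H w Hw). tauto.
        -- apply (proj1 (IHa Ca M _)). tauto.
        -- apply (proj1 (IHb Cb M _)). tauto.
    + rewrite (proj2 (IHa Ca M s)), (proj2 (IHb Cb M s)). firstorder.
  - split.
    + split.
      * intros H w Hw. destruct (H w Hw) as [t [[x Hx] [HR Ht]]].
        exists x. split; auto. apply (proj1 (IH Hc M t)); auto.
      * intros H w Hw. destruct (H w Hw) as [v [HR Hv]].
        exists (fun x => x = v). split; [eauto|split].
        -- intros x ->; auto.
        -- apply (proj1 (IH Hc M _)). intros x ->; auto.
    + split.
      * intros H w Hw [v [HR Hv]]. exact (proj1 (proj2 (IH Hc M (R M w))) (H w Hw) v HR Hv).
      * intros H w Hw. apply (proj2 (IH Hc M (R M w))). intros v HR Hv. apply (H w Hw). eauto.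
  - contradiction.
Qed.

Lemma down M (s t : state M) f : classical f -> (forall w, t w -> s w) -> supp M s f -> supp M t f.
Proof.
  intros C H Hs. apply (proj1 (flat f C M t)). intros w Hw.
  apply (proj1 (flat f C M s)); auto.
Qed.

Lemma empty_supp M (s : state M) f : classical f -> (forall w, ~ s w) -> supp M s f.
Proof. intros C H. apply (proj1 (flat f C M s)). intros w Hw; destruct (H w Hw). Qed.

Lemma bot_supp M (s : state M) : supp M s Bot <-> (forall w, ~ s w).
Proof. simpl. split; [intros [H1 H2] w Hw; exact (H2 w Hw (H1 w Hw)) | intros H; split; intros w Hw; destruct (H w Hw)]. Qed.

Lemma split_lem (C : dctx) p : forall M (s : state M), supp M s (plug C p) ->
  supp M s (plug C (And p NE)) \/ supp M s (plug C (And p Bot)).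
Proof.
  induction C as [|C IH b|b C IH|C IH b|b C IH]; intros M s H; simpl in *.
  - destruct (classic (exists w, s w)) as [Hn|Hn].
    + left; auto.
    + right; split; auto. apply bot_supp. intros w Hw; apply Hn; eauto.
  - destruct H as [H1 H2]. destruct (IH M s H1); [left|right]; auto.
  - destruct H as [H1 H2]. destruct (IH M s H2); [left|right]; auto.
  - destruct H as [t [u [U [H1 H2]]]]. destruct (IH M t H1); [left|right]; exists t, u; auto.
  - destruct H as [t [u [U [H1 H2]]]]. destruct (IH M u H2); [left|right]; exists t, u; auto.
Qed.

Theorem theorem4p34 (Phi : fset) (psi : form) :
  Der Phi psi -> entails Phi psi.
Proof.
  unfold entails. intro D. induction D; intros M s HG; simpl in *.
  - auto.
  - apply IHD; auto.
  - split; auto.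
  - apply (IHD M s HG).
  - apply (IHD M s HG).
  -
    apply (proj2 (flat a H M s)). intros w Hw Ht.
    assert (HS : forall f, funion G (sing a) f -> supp M (fun x => x = w) f).
    { intros f [Hf|Hf].
      - apply (down M s); [apply H0; auto | intros x Hx; subst; auto | auto].
      - rewrite Hf. apply (proj1 (flat a H M _)). intros x Hx; subst; auto. }
    exact (proj1 (bot_supp M (fun x => x = w)) (IHD M _ HS) w eq_refl).
  - apply empty_supp; auto. intros w Hw.
    pose proof (IHD1 M s HG) as A1. pose proof (IHD2 M s HG) as A2. simpl in A2.
    pose proof (proj1 (proj1 (flat a H M s)) A1 w Hw). pose proof (proj1 (proj2 (flat a H M s)) A2 w Hw). tauto.
  - auto.
  - auto.
  - auto.
  - auto.
  - auto.
  - auto.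
  - apply bot_supp. apply IHD; auto.
  - apply bot_supp. apply IHD; auto.
  - exists s, (fun _ => False). split; [intro; tauto|]. split; auto.
    apply empty_supp; auto.
  - exists s, s. split; [intro; tauto|]. auto.
  - destruct (IHD M s HG) as [t [u [U [H1 H2]]]]. exists u, t. split; [intro w; rewrite (U w); tauto|auto].
  - destruct (IHD1 M s (fun f Hf => HG f (or_introl Hf))) as [t [u [U [H1 H2]]]].
    apply (proj1 (union_closed c M s t u U)).
    + apply IHD2. intros f [Hf| ->]; auto.
      apply (down M s); [apply H; auto | intros w Hw; apply U; auto | apply HG; right; left; auto].
    + apply IHD3. intros f [Hf| ->]; auto.
      apply (down M s); [apply H0; auto | intros w Hw; apply U; auto | apply HG; right; right; auto].
  - destruct (IHD1 M s (fun f Hf => HG f (or_introl Hf))) as [t [u [U [H1 H2]]]].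
    exists t, u. split; [auto|split; auto]. apply IHD2. intros f [Hf| ->]; auto.
    apply (down M s); [apply H; auto | intros w Hw; apply U; auto | apply HG; right; auto].
  - destruct (IHD M s HG) as [t [u [U [H1 H2]]]].
    apply (ext_supp M s u); auto. intro w. rewrite (U w).
    pose proof (proj1 (bot_supp M t) H1 w). tauto.
  - destruct (IHD M s HG) as [t [u [U [[H1 [w Hw]] H2]]]].
    destruct (proj1 (bot_supp M t) H1 w Hw).
  - intros w Hw. destruct (IHD2 M s HG w Hw) as [t [Hn [HR Ht]]].
    exists t. split; auto. split; auto. apply IHD1. intros f ->; auto.
  - intros w Hw. apply IHD. intros a Ha. exact (H0 a Ha M s HG w Hw).
  - apply IHD; auto.
  - apply IHD; auto.
  - intros w Hw. destruct (IHD M s HG w Hw) as [t [Hn [HR [t1 [t2 [U [H1 [H2 Hn2]]]]]]]].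
    exists t2. split; auto. split; auto. intros x Hx. apply HR, U; auto.
  - intros w Hw. destruct (IHD1 M s HG w Hw) as [t1 [[x1 Hx1] [HR1 H1]]].
    destruct (IHD2 M s HG w Hw) as [t2 [_ [HR2 H2]]].
    exists (fun x => t1 x \/ t2 x). split; [eauto|split].
    + intros x [Hx|Hx]; auto.
    + exists t1, t2. split; [intro; tauto|auto].
  - intros w Hw. destruct (IHD M s HG w Hw) as [H1 H2].
    exists (R M w). auto.
  - intros w Hw. pose proof (IHD1 M s HG w Hw) as H1. simpl in H1.
    destruct (IHD2 M s HG w Hw) as [t [_ [HR Ht]]].
    exists (R M w), t. split; [intro x; split; [tauto|intros [?|?]; auto]|auto].
  - destruct (split_lem C p M s (IHD1 M s (fun f Hf => HG f (or_introl Hf)))) as [H|H].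
    + apply IHD2. intros f [Hf| ->]; auto. apply HG; right; left; auto.
    + apply IHD3. intros f [Hf| ->]; auto. apply HG; right; right; auto.
  - pose proof (IHD M s HG) as H. simpl in H.
    exists (fun w => s w /\ exists t : state M, (exists x, t x) /\ (forall x, t x -> R M w x) /\ supp M t (plug C (And p NE))),
           (fun w => s w /\ exists t : state M, (exists x, t x) /\ (forall x, t x -> R M w x) /\ supp M t (plug C (And p Bot))).
    split; [|split].
    + intro w. split; [|tauto]. intro Hw. destruct (H w Hw) as [t [Hn [HR Ht]]].
      destruct (split_lem C p M t Ht); [left|right]; split; eauto.
    + intros w [_ Hw]; auto.
    + intros w [_ Hw]; auto.
  - pose proof (IHD M s HG) as H. simpl in H.
    exists (fun w => s w /\ supp M (R M w) (plug C (And p NE))),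
           (fun w => s w /\ supp M (R M w) (plug C (And p Bot))).
    split; [|split].
    + intro w. split; [|tauto]. intro Hw.
      destruct (split_lem C p M _ (H w Hw)); [left|right]; auto.
    + intros w [_ Hw]; auto.
    + intros w [_ Hw]; auto.
Qed.
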